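(* Let $a,b,e\in\mathbb Z$ with $a\neq0$, $e>0$, such that $h_2(j)=aj^2+bj+e$ satisfies $h_2(j)\ge 0$ for all integers $j\ge0$. Let $\alpha=a/e$, $\beta=b/e$ and $$f(x)=\tfrac12x^2-\left(\alpha+\beta+\tfrac32\right)x+(5\alpha+3\beta+2).$$ Assume $\alpha+\beta\ge 2$. If there exists an integer $d$ with $3\le d\le c(h_2)+1$ and $f(d)<0$, then $\operatorname{hdepth}(h_2)<d$.
   Context: Let $\mathcal H_0$ denote the set of functions $h:\mathbb Z_{\ge 0}\to\mathbb Z_{\ge 0}$ with $h(0)>0$. For $h\in\mathcal H_0$ and integers $0\le k\le d$, put $\beta_k^d(h)=\sum_{j=0}^k(-1)^{k-j}\binom{d-j}{k-j}h(j)$. The Hilbert depth of $h$ is $\operatorname{hdepth}(h)=\max\{d\in\mathbb Z_{\ge0}:\ \beta_k^d(h)\ge 0\text{ for all }0\le k\le d\}$; this set contains $d=0$ and is known to be bounded above by $c(h):=\lfloor h(1)/h(0)\rfloor$, so the maximum exists. *)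

(* Defs.v *)
From mathcomp Require Import all_boot all_order all_algebra.
Set Implicit Arguments. Unset Strict Implicit. Unset Printing Implicit Defensive.
Import Order.TTheory GRing.Theory Num.Theory.
Local Open Scope ring_scope.

(* Hilbert functions h : Z_{>=0} -> Z_{>=0} are represented as nat -> int
   (nonnegativity is a hypothesis where relevant). *)

Definition betak (h : nat -> int) (d k : nat) : int :=
  \sum_(j < k.+1) (-1) ^+ (k - j)%N * ('C(d - j, k - j))%:Z * h j.

Definition hgood (h : nat -> int) (d : nat) : bool :=
  [forall k : 'I_d.+1, 0 <= betak h d k].

Definition cbound (h : nat -> int) : nat := (`|h 1%N| %/ `|h 0%N|)%N.

(* hdepth(h) = max { d : all beta_k^d(h) >= 0 }; the set is known to be
   contained in [0, c(h)], so the max is taken over d <= c(h). *)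
Definition hdepth (h : nat -> int) : nat :=
  (\max_(d < (cbound h).+1 | hgood h d) d)%N.

Definition h2 (a b e : int) : nat -> int :=
  fun j => a * (j%:Z) ^+ 2 + b * j%:Z + e.

Definition fpoly (alpha beta x : rat) : rat :=
  x ^+ 2 / 2 - (alpha + beta + 3 / 2) * x + (5 * alpha + 3 * beta + 2).

(* Main.v *)
Require Import Defs.
From mathcomp Require Import all_boot all_order all_algebra.
From mathcomp Require Import zify ring lra.
Import Order.TTheory GRing.Theory Num.Theory.
Local Open Scope ring_scope.

Lemma bin2x (D : nat) : ('C(D, 2) * 2 = D * D.-1)%N.
Proof. by rewrite bin_ffact ffactnS ffactn1. Qed.

Lemma b1 h D : betak h D 1 = - (D%:Z) * h 0%N + h 1%N.
Proof. rewrite /betak !big_ord_recr big_ord0 /= subn0 subnn bin0 bin1 /= subn0.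
rewrite expr1 expr0; ring. Qed.

Lemma b2 h D : (1 <= D)%N -> 2 * betak h D 2 =
   (D%:Z) * (D%:Z - 1) * h 0%N - 2 * (D%:Z - 1) * h 1%N + 2 * h 2%N.
Proof. move=> HD. rewrite /betak !big_ord_recr big_ord0 /= !subn0 subnn bin0 /=.
have -> : (2 - 1 = 1)%N by []. rewrite bin1 expr1 expr0 /= (expr2 (-1)).
have -> : (D - 1)%N = D.-1 by rewrite subn1.
have -> : (D.-1 : int) = D%:Z - 1 by case: D HD => // n _ /=; rewrite -addn1 PoszD addrK.
have e2 : (2 * ('C(D, 2))%:Z = D%:Z * (D%:Z - 1))%R.
  rewrite -[2]/(2%:Z) -PoszM mulnC bin2x. case: D HD => // n _ /=. rewrite PoszM. congr (_ * _).
  by rewrite -addn1 PoszD addrK.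
transitivity (2 * ('C(D, 2))%:Z * h 0%N - 2 * (D%:Z - 1) * h 1%N + 2 * h 2%N); last by rewrite e2.
ring.
Qed.

Lemma key (A B x y : rat) :
 y * y / 2 - (A + B + 3 / 2) * y + (5 * A + 3 * B + 2) < 0 ->
 0 <= x * (x - 1) - 2 * (x - 1) * (A + B + 1) + 2 * (4 * A + 2 * B + 1) ->
 0 <= (x - y) * (A + B + 1 - x) ->
 0 <= (x - y) * (x - y) -> 0 <= x - y -> False.
Proof. move=> q1 q2 q3 q4 q5.
have : 0 <= (x - y) * (A + B + 1 - x) + (x - y) * (x - y) / 2 + (x - y) / 2.
  by rewrite !addr_ge0 // divr_ge0.
have -> : (x - y) * (A + B + 1 - x) + (x - y) * (x - y) / 2 + (x - y) / 2 =
   (y * y / 2 - (A + B + 3 / 2) * y + (5 * A + 3 * B + 2)) -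
   (x * (x - 1) - 2 * (x - 1) * (A + B + 1) + 2 * (4 * A + 2 * B + 1)) / 2 by field.
move=> h. have : (0:rat) < 0.
 apply: (le_lt_trans h). rewrite subr_lt0. apply: (lt_le_trans q1). by rewrite divr_ge0.
by rewrite ltxx.
Qed.

Theorem lemma2p3 (a b e : int) (ha : a != 0) (he : 0 < e)
  (hnn : forall j : nat, 0 <= h2 a b e j)
  (hab : 2 <= (a%:~R / e%:~R : rat) + b%:~R / e%:~R)
  (d : nat) (hd3 : (3 <= d)%N) (hdc : (d <= (cbound (h2 a b e)).+1)%N)
  (hf : fpoly (a%:~R / e%:~R) (b%:~R / e%:~R) d%:R < 0) :
  (hdepth (h2 a b e) < d)%N.
Proof.
case: d hd3 hdc hf => // n hd3 hdc hf.
rewrite ltnS /hdepth; apply/bigmax_leqP => D /forallP HD.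
rewrite leqNgt; apply/negP => hnD.
have D3 : (2 < D)%N by lia.
have H1 := HD (inord 1). have H2 := HD (inord 2).
rewrite inordK // in H1; rewrite inordK // in H2; last by lia.
rewrite b1 in H1.
have {H2} : 0 <= 2 * betak (h2 a b e) D 2 by rewrite mulr_ge0.
rewrite b2; last by lia.
move=> H2.
have {}H1 : 0 <= - D%:Z * e + (a + b + e).
  by move: H1; rewrite /h2 /=; congr (_ <= _); ring.
have {}H2 : 0 <= D%:Z * (D%:Z - 1) * e - 2 * (D%:Z - 1) * (a + b + e) + 2 * (4 * a + 2 * b + e).
  by move: H2; rewrite /h2 /=; congr (_ <= _); ring.
move: H1 H2; rewrite -!(ler0z rat) !(rmorphD, rmorphN, rmorphM, rmorphB) /= => H1 H2.
move: hf; rewrite /fpoly.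
set A := a%:~R / e%:~R : rat. set B := b%:~R / e%:~R : rat.
have E0 : (0 : rat) < e%:~R by rewrite ltr0z.
have ea : (a%:~R : rat) = A * e%:~R by rewrite /A divfK // gt_eqF.
have eb : (b%:~R : rat) = B * e%:~R by rewrite /B divfK // gt_eqF.
rewrite ea eb in H1 H2.
set E := (e%:~R : rat) in E0 H1 H2 ea eb.
set x := (D%:R : rat) in H1 H2 *.
have hx : ((D : int)%:~R : rat) = x by [].
have h1 : ((1 : int)%:~R : rat) = 1 by [].
rewrite hx h1 in H1 H2.
have {}H1 : 0 <= A + B + 1 - x.
  by rewrite -(pmulr_rge0 _ E0); move: H1; congr (_ <= _); ring.
have {}H2 : 0 <= x * (x - 1) - 2 * (x - 1) * (A + B + 1) + 2 * (4 * A + 2 * B + 1).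
  by rewrite -(pmulr_rge0 _ E0); move: H2; congr (_ <= _); ring.
have hn : (n.+1%:R : rat) <= x by rewrite /x ler_nat.
set y := (n.+1%:R : rat) in hn *.
move=> hf.
have p1 : 0 <= (x - y) * (A + B + 1 - x) by rewrite mulr_ge0 // subr_ge0.
have p2 : 0 <= (x - y) ^+ 2 := sqr_ge0 (x - y).
have p3 : 0 <= x - y by rewrite subr_ge0.
move: hf H2 p1 p2 p3; rewrite !expr2 => q1 q2 q3 q4 q5; move: (@key A B x y) => K. apply: K; [ exact: q1 | exact: q2 | exact: q3 | exact: q4 | exact: q5 ].
lia.
lia.
Qed.
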